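(* Let $m\in\mathbb{Z}_{\ge0}$ and, in $\mathbb{R}^{2m+6}$, let $\rho=\frac12\sum_re_r$, $v_S=\sum_{r\in S}e_r$ ($S\subset\{0,\ldots,2m+5\}$, $|S|=m+1$), $w_{ij}=\rho-e_i-e_j$, $P^{(m)}=\mathrm{conv}\{v_S,w_{ij}\}$, $P_{\rm I}=\mathrm{conv}\{v_S\}$, $P_{\rm II}=\mathrm{conv}(\{v_S:S\subset\{1,\ldots,2m+5\}\}\cup\{w_{0j}:1\le j\le 2m+5\})$, $P_{\rm III}=\mathrm{conv}(\{v_S:S\subset\{3,\ldots,2m+5\}\}\cup\{w_{ij}:0\le i<j\le 2\})$. Then every face of $P^{(m)}$ is a face of $P_{\rm I}$, of $\sigma(P_{\rm II})$ or of $\sigma(P_{\rm III})$ for some coordinate permutation $\sigma\in S_{2m+6}$, except for the interior of $P^{(m)}$ and the images under coordinate permutations of the facet of $P^{(m)}$ given by $\alpha_0+\alpha_1+\alpha_2+\alpha_3=0$. *)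

(* Defs.v *)
From HB Require Import structures.
From mathcomp Require Import all_boot all_order all_algebra all_fingroup.
From mathcomp Require Import all_classical all_reals.

Import Order.TTheory GRing.Theory Num.Theory.
Local Open Scope ring_scope.
Local Open Scope classical_set_scope.

Definition conv {R : realType} {n : nat} (A : set 'rV[R]_n) : set 'rV[R]_n :=
  [set x | exists (k : nat) (l : 'I_k -> R) (p : 'I_k -> 'rV[R]_n),
     (forall i, A (p i)) /\ (forall i, 0 <= l i) /\
     \sum_i l i = 1 /\ x = \sum_i l i *: p i].

Definition dotv {R : realType} {n : nat} (c x : 'rV[R]_n) : R :=
  \sum_i c ord0 i * x ord0 i.

(* F is a face of the polytope P: the set of maximizers on P of some linear
   functional (c = 0 gives P itself). For polytopes all faces are exposed. *)
Definition is_face {R : realType} {n : nat} (P F : set 'rV[R]_n) : Prop :=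
  exists c : 'rV[R]_n,
    F = [set x | P x /\ forall y, P y -> dotv c y <= dotv c x].

Definition permv {R : realType} {n : nat} (s : 'S_n) (x : 'rV[R]_n) : 'rV[R]_n :=
  \row_i x ord0 (s i).

Definition N (m : nat) : nat := (m.*2 + 5).+1.
Definition idx (m k : nat) : 'I_(N m) := @inord (m.*2 + 5) k.

Definition ev (R : realType) {n : nat} (r : 'I_n) : 'rV[R]_n := delta_mx ord0 r.
Definition rho (R : realType) (n : nat) : 'rV[R]_n := \sum_r 2^-1 *: ev R r.
Definition vS (R : realType) {n : nat} (S : {set 'I_n}) : 'rV[R]_n :=
  \sum_(r in S) ev R r.
Definition w (R : realType) {n : nat} (i j : 'I_n) : 'rV[R]_n :=
  rho R n - ev R i - ev R j.


Definition Pm (R : realType) (m : nat) : set 'rV[R]_(N m) :=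
  conv [set x | (exists S : {set 'I_(N m)}, #|S| = m.+1 /\ x = vS R S)
             \/ (exists i j : 'I_(N m), (i < j)%N /\ x = w R i j)].

Definition PI (R : realType) (m : nat) : set 'rV[R]_(N m) :=
  conv [set x | exists S : {set 'I_(N m)}, #|S| = m.+1 /\ x = vS R S].

Definition PII (R : realType) (m : nat) : set 'rV[R]_(N m) :=
  conv [set x | (exists S : {set 'I_(N m)}, #|S| = m.+1 /\
                   (forall r, r \in S -> (1 <= r)%N) /\ x = vS R S)
             \/ (exists j : 'I_(N m), (1 <= j)%N /\ x = w R (idx m 0) j)].

Definition PIII (R : realType) (m : nat) : set 'rV[R]_(N m) :=
  conv [set x | (exists S : {set 'I_(N m)}, #|S| = m.+1 /\
                   (forall r, r \in S -> (3 <= r)%N) /\ x = vS R S)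
             \/ (exists i j : 'I_(N m), (i < j)%N /\ (j <= 2)%N /\ x = w R i j)].

Definition F0 (R : realType) (m : nat) : set 'rV[R]_(N m) :=
  [set x | Pm R m x /\
     x ord0 (idx m 0) + x ord0 (idx m 1) + x ord0 (idx m 2) + x ord0 (idx m 3) = 0].

(* Main.v *)
Require Import Defs.
From HB Require Import structures.
From mathcomp Require Import all_boot all_order all_algebra all_fingroup.
From mathcomp Require Import all_classical all_reals.
From mathcomp Require Import zify ring lra.
Import Order.TTheory GRing.Theory Num.Theory.
Local Open Scope ring_scope.
Local Open Scope classical_set_scope.

Lemma ev_entry {R : realType} {n : nat} (r i : 'I_n) : ev R r ord0 i = (i == r)%:R.
Proof. by rewrite /ev mxE eqxx. Qed.

Lemma rho_entry {R : realType} {n : nat} (i : 'I_n) : rho R n ord0 i = 2^-1.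
Proof.
rewrite /rho summxE (bigD1 i) //= big1 ?addr0.
  by rewrite mxE ev_entry eqxx mulr1.
by move=> j /negbTE ji; rewrite mxE ev_entry eq_sym ji mulr0.
Qed.

Lemma vS_entry {R : realType} {n : nat} (S : {set 'I_n}) i : vS R S ord0 i = (i \in S)%:R.
Proof.
rewrite /vS summxE; case: (boolP (i \in S)) => iS.
  rewrite (bigD1 i) //= big1 ?addr0 ?ev_entry ?eqxx //.
  by move=> j /andP[_ /negbTE ji]; rewrite ev_entry eq_sym ji.
rewrite big1 // => j jS.
rewrite ev_entry; case: eqP => // ij.
by rewrite ij jS in iS.
Qed.

Lemma w_entry {R : realType} {n : nat} (i j k : 'I_n) :
  w R i j ord0 k = 2^-1 - (k == i)%:R - (k == j)%:R.
Proof. by rewrite /w !mxE rho_entry /=. Qed.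

Lemma w_sym {R : realType} {n : nat} (i j : 'I_n) : w R i j = w R j i.
Proof. by apply/rowP => k; rewrite !w_entry addrAC. Qed.

Lemma permv_entry {R : realType} {n : nat} (s : 'S_n) (x : 'rV[R]_n) i :
  permv s x ord0 i = x ord0 (s i).
Proof. by rewrite /permv mxE. Qed.

Lemma permv_sum {R : realType} {n : nat} (s : 'S_n) k (l : 'I_k -> R) (p : 'I_k -> 'rV[R]_n) :
  permv s (\sum_i l i *: p i) = \sum_i l i *: permv s (p i).
Proof.
apply/rowP => j; rewrite permv_entry !summxE; apply: eq_bigr => i _.
by rewrite !mxE.
Qed.

Lemma permvK {R : realType} {n : nat} (s : 'S_n) (x : 'rV[R]_n) :
  permv s (permv (s^-1)%g x) = x.
Proof. by apply/rowP => j; rewrite !permv_entry permK. Qed.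

Lemma permvKV {R : realType} {n : nat} (s : 'S_n) (x : 'rV[R]_n) :
  permv (s^-1)%g (permv s x) = x.
Proof. by apply/rowP => j; rewrite !permv_entry permKV. Qed.

Lemma permv_vS {R : realType} {n : nat} (s : 'S_n) (S : {set 'I_n}) :
  permv s (vS R S) = vS R (s @^-1: S).
Proof. by apply/rowP => j; rewrite permv_entry !vS_entry inE. Qed.

Lemma permv_w {R : realType} {n : nat} (s : 'S_n) (i j : 'I_n) :
  permv s (w R i j) = w R ((s^-1)%g i) ((s^-1)%g j).
Proof.
apply/rowP => k; rewrite permv_entry !w_entry.
by rewrite -(inj_eq (@perm_inj _ (s^-1)%g) (s k) i) permK -(inj_eq (@perm_inj _ (s^-1)%g) (s k) j) permK.
Qed.

Lemma dotv_sum {R : realType} {n : nat} (c : 'rV[R]_n) k (l : 'I_k -> R) (p : 'I_k -> 'rV[R]_n) :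
  dotv c (\sum_i l i *: p i) = \sum_i l i * dotv c (p i).
Proof.
rewrite /dotv; under eq_bigr do rewrite summxE big_distrr.
rewrite exchange_big /=; apply: eq_bigr => i _; rewrite big_distrr /=.
by apply: eq_bigr => j _; rewrite mxE mulrCA.
Qed.

Lemma dotv_vS {R : realType} {n : nat} (c : 'rV[R]_n) S :
  dotv c (vS R S) = \sum_(i in S) c ord0 i.
Proof.
rewrite /dotv [RHS]big_mkcond /=; apply: eq_bigr => i _.
by rewrite vS_entry; case: (i \in S); rewrite ?mulr1 ?mulr0.
Qed.

Lemma dotv_w {R : realType} {n : nat} (c : 'rV[R]_n) (i j : 'I_n) : i != j ->
  dotv c (w R i j) = 2^-1 * \sum_k c ord0 k - c ord0 i - c ord0 j.
Proof.
move=> ij; rewrite /dotv.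
under eq_bigr do rewrite w_entry !mulrBr.
rewrite !sumrB -big_distrl mulrC; congr (_ - _ - _).
  rewrite (bigD1 i) //= eqxx mulr1 big1 ?addr0 //.
  by move=> k /negbTE ->; rewrite mulr0.
rewrite (bigD1 j) //= eqxx mulr1 big1 ?addr0 //.
by move=> k /negbTE ->; rewrite mulr0.
Qed.

Lemma conv_sub {R : realType} {n : nat} (A B : set 'rV[R]_n) :
  (forall x, A x -> B x) -> forall x, conv A x -> conv B x.
Proof.
move=> AB x [k [l [p [hp [hl [h1 ->]]]]]].
by exists k, l, p; split=> // i; apply: AB.
Qed.

Lemma conv_self {R : realType} {n : nat} (A : set 'rV[R]_n) x : A x -> conv A x.
Proof.
move=> Ax; exists 1%N, (fun _ => 1), (fun _ => x); split=> //; split=> //.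
by rewrite !big_ord1 scale1r.
Qed.

Lemma conv_le {R : realType} {n : nat} (A : set 'rV[R]_n) c M :
  (forall g, A g -> dotv c g <= M) -> forall x, conv A x -> dotv c x <= M.
Proof.
move=> hA x [k [l [p [hp [hl [h1 ->]]]]]].
rewrite dotv_sum -[M]mul1r -h1 big_distrl /=.
by apply: ler_sum => i _; apply: ler_wpM2l => //; apply: hA.
Qed.

Lemma conv_eq {R : realType} {n : nat} (A : set 'rV[R]_n) c M :
  (forall g, A g -> dotv c g = M) -> forall x, conv A x -> dotv c x = M.
Proof.
move=> hA x [k [l [p [hp [hl [h1 ->]]]]]].
rewrite dotv_sum -[M]mul1r -h1 big_distrl /=.
by apply: eq_bigr => i _; rewrite hA.
Qed.

Arguments conv_le {R n A c M} _ {x}.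
Arguments conv_eq {R n A c M} _ {x}.
Arguments conv_sub {R n A B} _ {x}.

Definition faceset {R : realType} {n} (P : set 'rV[R]_n) c :=
  [set x | P x /\ forall y, P y -> dotv c y <= dotv c x].

Lemma face_eq {R : realType} {n : nat} (A : set 'rV[R]_n) c M g0 :
  (forall g, A g -> dotv c g <= M) -> A g0 -> dotv c g0 = M ->
  faceset (conv A) c = conv [set g | A g /\ dotv c g = M].
Proof.
move=> hA Ag0 hg0; apply/seteqP; split => x /=.
  move=> [hx hmax].
  have xM : dotv c x = M.
    apply/eqP; rewrite eq_le (conv_le hA hx) /= -hg0.
    by apply: hmax; apply: conv_self.
  move: hx xM => [k [l [p [hp [hl [h1 xE]]]]]] xM.
  have h0 : \sum_i l i * (M - dotv c (p i)) = 0.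
    rewrite [LHS](eq_bigr (fun i => l i * M - l i * dotv c (p i))); last first.
      by move=> i _; rewrite mulrBr.
    by rewrite sumrB -big_distrl /= h1 mul1r -dotv_sum -xE xM subrr.
  have hz i : l i != 0 -> dotv c (p i) = M.
    move=> li.
    have hnn : forall j, true -> 0 <= l j * (M - dotv c (p j)).
      move=> j _; apply: mulr_ge0 => //; rewrite subr_ge0; exact: hA.
    have /eqP := psumr_eq0P hnn h0 (i := i) isT.
    by rewrite mulf_eq0 (negbTE li) /= subr_eq0 => /eqP.
  exists k, l, (fun i => if l i == 0 then g0 else p i); split.
    by move=> i /=; case: eqP => li; [split | split; [|apply: hz; apply/eqP]].
  split=> //; split=> //; rewrite xE; apply: eq_bigr => i _.
  by case: eqP => // ->; rewrite !scale0r.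
move=> hx.
have xM : dotv c x = M by apply: (conv_eq _ hx) => g [].
split; first by apply: conv_sub hx => g [].
by move=> y hy; rewrite xM; apply: conv_le hy.
Qed.

Lemma face_sub {R : realType} {n : nat} (A B : set 'rV[R]_n) c M g0 :
  (forall g, B g -> A g) ->
  (forall g, A g -> dotv c g <= M) -> B g0 -> dotv c g0 = M ->
  (forall g, A g -> dotv c g = M -> B g) ->
  faceset (conv A) c = faceset (conv B) c.
Proof.
move=> BA hA Bg0 hg0 AB.
rewrite (@face_eq _ _ A c M g0 hA (BA _ Bg0) hg0) (@face_eq _ _ B c M g0) //; last first.
  by move=> g /BA; apply: hA.
congr conv; apply/seteqP; split => g /= [h1 h2]; split => //.
  by apply: AB.
by apply: BA.
Qed.

Lemma conv_perm {R : realType} {n : nat} (s : 'S_n) (A : set 'rV[R]_n) :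
  permv s @` conv A = conv (permv s @` A).
Proof.
apply/seteqP; split => x /=.
  move=> [y [k [l [p [hp [hl [h1 ->]]]]]] <-].
  exists k, l, (fun i => permv s (p i)); split; last by rewrite permv_sum.
  by move=> i; exists (p i).
move=> [k [l [p [hp [hl [h1 ->]]]]]].
exists (\sum_i l i *: permv (s^-1)%g (p i)); last first.
  by rewrite permv_sum; apply: eq_bigr => i _; rewrite permvK.
exists k, l, (fun i => permv (s^-1)%g (p i)); split => // i.
by have [y Ay <-] := hp i; rewrite permvKV.
Qed.

Definition GenP (R : realType) (m : nat) : set 'rV[R]_(N m) :=
  [set x | (exists S : {set 'I_(N m)}, #|S| = m.+1 /\ x = vS R S)
             \/ (exists i j : 'I_(N m), (i < j)%N /\ x = w R i j)].
Definition GenI (R : realType) (m : nat) : set 'rV[R]_(N m) :=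
  [set x | exists S : {set 'I_(N m)}, #|S| = m.+1 /\ x = vS R S].
Definition GenII (R : realType) (m : nat) : set 'rV[R]_(N m) :=
  [set x | (exists S : {set 'I_(N m)}, #|S| = m.+1 /\
                   (forall r, r \in S -> (1 <= r)%N) /\ x = vS R S)
             \/ (exists j : 'I_(N m), (1 <= j)%N /\ x = w R (idx m 0) j)].
Definition GenIII (R : realType) (m : nat) : set 'rV[R]_(N m) :=
  [set x | (exists S : {set 'I_(N m)}, #|S| = m.+1 /\
                   (forall r, r \in S -> (3 <= r)%N) /\ x = vS R S)
             \/ (exists i j : 'I_(N m), (i < j)%N /\ (j <= 2)%N /\ x = w R i j)].

Lemma PmE R m : Pm R m = conv (GenP R m). Proof. by []. Qed.
Lemma PIE R m : PI R m = conv (GenI R m). Proof. by []. Qed.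
Lemma PIIE R m : PII R m = conv (GenII R m). Proof. by []. Qed.
Lemma PIIIE R m : PIII R m = conv (GenIII R m). Proof. by []. Qed.

Lemma GenP_w R m (i j : 'I_(N m)) : i != j -> GenP R m (w R i j).
Proof.
move=> ij; right; case: (ltngtP i j) => h.
- by exists i, j.
- by exists j, i; rewrite w_sym.
- by move/val_inj: h => h; rewrite h eqxx in ij.
Qed.

Lemma GenP_perm R m (s : 'S_(N m)) g : GenP R m g -> GenP R m (permv s g).
Proof.
case=> [[S [hS ->]]|[i [j [ij ->]]]].
  by left; exists (s @^-1: S); rewrite permv_vS card_preimset //; apply: perm_inj.
rewrite permv_w; apply: GenP_w.
by rewrite (inj_eq (@perm_inj _ _)) neq_ltn ij.
Qed.

Lemma Pm_perm R m (s : 'S_(N m)) x : Pm R m x -> Pm R m (permv s x).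
Proof.
move=> hx; have : (permv s @` Pm R m) (permv s x) by exists x.
rewrite PmE conv_perm; apply: conv_sub => g [g' hg' <-]; exact: GenP_perm.
Qed.

Lemma N_eq m : (N m = 2 * m.+1 + 4)%N.
Proof. rewrite /N -mul2n; lia. Qed.

Lemma halfN (R : realType) m : 2^-1 * (N m)%:R = (m.+1)%:R + 2 :> R.
Proof.
rewrite N_eq natrD natrM mulrDr mulrA mulVf ?mul1r; last by rewrite pnatr_eq0.
congr (_ + _); rewrite (_ : 4%:R = 2 * 2 :> R); last by rewrite -natrM.
by rewrite mulrA mulVf ?mul1r // pnatr_eq0.
Qed.

Lemma idx_val m k : (k < N m)%N -> nat_of_ord (idx m k) = k.
Proof. by move=> h; rewrite /idx inordK. Qed.

Lemma idx_ord m (a : 'I_(N m)) : idx m a = a.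
Proof. exact: inord_val. Qed.

Lemma sum_Pm R m x : Pm R m x -> \sum_j x ord0 j = (m.+1)%:R.
Proof.
have -> : \sum_j x ord0 j = dotv (const_mx 1) x.
  by rewrite /dotv; apply: eq_bigr => j _; rewrite mxE mul1r.
rewrite PmE; apply: conv_eq => g [[S [hS ->]]|[i [j [ij ->]]]].
  rewrite dotv_vS; under eq_bigr do rewrite mxE.
  by rewrite sumr_const hS.
rewrite dotv_w; last by rewrite neq_ltn ij.
rewrite !mxE; under eq_bigr do rewrite mxE.
rewrite sumr_const card_ord halfN; lra.
Qed.

Lemma sort_perm (R : realType) n (cc : 'I_n -> R) :
  exists p : 'S_n, forall a b : 'I_n, (a <= b)%N -> cc (p a) <= cc (p b).
Proof.
pose le := fun i j : 'I_n => cc i <= cc j.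
pose s := sort le (enum 'I_n).
have hperm : perm_eq s (ord_tuple n) by rewrite val_ord_tuple perm_sort perm_refl.
have [p hp] := tuple_permP hperm.
exists p => a b ab.
have hs : sorted le s.
  by apply: sort_sorted => i j; rewrite /le le_total.
have tr : transitive le by move=> x y z; rewrite /le => h1 h2; apply: le_trans h1 h2.
have rf : reflexive le by move=> x; rewrite /le lexx.
have sz : size s = n by rewrite size_sort size_enum_ord.
have nthE (k : 'I_n) : nth k s k = p k.
  rewrite hp -tnth_nth tnth_mktuple tnth_ord_tuple //.
have := sorted_leq_nth tr rf a hs; rewrite /le => h.
have := h a b; rewrite !inE sz !ltn_ord => /(_ isT isT ab).
by rewrite -nthE -[p b]nthE [nth b s b](set_nth_default a) ?sz.
Qed.

Lemma face_eq2 {R : realType} {n : nat} (A : set 'rV[R]_n) c M g0 :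
  (forall g, A g -> dotv c g <= M) -> A g0 -> dotv c g0 = M ->
  faceset (conv A) c = [set x | conv A x /\ dotv c x = M].
Proof.
move=> hA Ag0 hg0; apply/seteqP; split => x /=.
  move=> [hx hmax]; split => //.
  apply/eqP; rewrite eq_le (conv_le hA hx) /= -hg0.
  by apply: hmax; apply: conv_self.
by move=> [hx xM]; split => // y hy; rewrite xM; apply: conv_le hy.
Qed.

Lemma exists_card n k : (k <= n)%N -> exists S : {set 'I_n}, #|S| = k.
Proof.
move=> kn; exists [set widen_ord kn i | i : 'I_k].
by rewrite card_imset ?card_ord // => a b /(congr1 val) /= h; apply: val_inj.
Qed.

Lemma argmax_set (R : realType) n k (cc : 'I_n -> R) : (k <= n)%N ->
  exists2 Sx : {set 'I_n}, #|Sx| = k &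
    forall S : {set 'I_n}, #|S| = k -> \sum_(i in S) cc i <= \sum_(i in Sx) cc i.
Proof.
move=> kn; have [S0 hS0] := exists_card _ _ kn.
have h0 : (fun S : {set 'I_n} => #|S| == k) S0 by apply/eqP.
case: (@Order.TotalTheory.arg_maxP _ R _ S0 (fun S : {set 'I_n} => #|S| == k)
         (fun S => \sum_(i in S) cc i) h0) => Sx /eqP hSx hmax.
by exists Sx => // S /eqP hS; apply: hmax.
Qed.

Lemma exists_out n (S X : {set 'I_n}) : (#|X| + #|S| < n)%N ->
  exists j, j \notin S /\ j \notin X.
Proof.
move=> hc.
have : (0 < #|~: S :\: X|)%N.
  have := cardsC S; rewrite card_ord => hC.
  have := cardsID X (~: S) => hI.
  have : (#|~: S :&: X| <= #|X|)%N by apply: subset_leq_card; apply: subsetIr.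
  lia.
case/card_gt0P => j; rewrite !inE => /andP[jX jS].
by exists j.
Qed.

Lemma swap_le (R : realType) n k (cc : 'I_n -> R) (V : R)
  (hmax : forall S : {set 'I_n}, #|S| = k -> \sum_(i in S) cc i <= V)
  (S : {set 'I_n}) : #|S| = k -> V <= \sum_(i in S) cc i ->
  forall t j, t \in S -> j \notin S -> cc j <= cc t.
Proof.
move=> hS hV t j tS jS.
have jS' : j \notin S :\ t by rewrite !inE negb_and jS orbT.
have hc : #|j |: (S :\ t)| = k.
  by rewrite cardsU1 jS' -hS (cardsD1 t S) tS.
have := hmax _ hc; rewrite big_setU1 //= => h1.
move: hV; rewrite (big_setD1 t tS) /= => h2.
have := le_trans h1 h2; by rewrite lerD2r.
Qed.

Lemma split_sum (R : realType) n (S : {set 'I_n}) (f : 'I_n -> R) :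
  \sum_i f i = \sum_(i in S) f i + \sum_(i in ~: S) f i.
Proof.
rewrite (bigID (mem S)) /=; congr (_ + _); apply: eq_bigl => i; by rewrite inE.
Qed.

Lemma sum4 (R : realType) (f : nat -> R) :
  \sum_(k < 4) f k = f 0%N + f 1%N + f 2%N + f 3%N.
Proof. by rewrite !big_ord_recr big_ord0 /= add0r. Qed.

Lemma arithL m a b : (m.+1 + a = N m)%N -> (4 + b = a)%N -> b = m.+1.
Proof. rewrite N_eq; lia. Qed.

Lemma key_arith (R : realType) (x0 y M s : R) : 0 < y ->
  (x0 * M + y * (M - s) = M * y + M * x0 <-> s = 0).
Proof.
move=> yp; split => h; last by rewrite h subr0; ring.
have : y * s = 0 by move: h; rewrite mulrBr => h; nra.
by move/eqP; rewrite mulf_eq0 gt_eqF //= => /eqP.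
Qed.

Theorem lemma5p12 (R : realType) (m : nat) (F : set 'rV[R]_(N m)) :
  is_face (Pm R m) F ->
  F <> Pm R m ->
  (forall s : 'S_(N m), F <> permv s @` F0 R m) ->
  is_face (PI R m) F \/
  exists s : 'S_(N m),
    is_face (permv s @` PII R m) F \/ is_face (permv s @` PIII R m) F.
Proof.
move=> [c Fdef] FneP Fne0.
have FE : F = faceset (Pm R m) c by rewrite Fdef.
pose cc := fun i : 'I_(N m) => c ord0 i.
have [p hp] := sort_perm _ _ cc.
pose t := fun k : nat => p (idx m k).
have Nge : (6 <= N m)%N by rewrite N_eq; lia.
have tinj : forall a b, (a < N m)%N -> (b < N m)%N -> t a = t b -> a = b.
  move=> a b ha hb /perm_inj /(congr1 val) /=; rewrite !idx_val //.
have hk : forall k j, (k < 4)%N -> (forall k', (k' < k)%N -> j != t k') ->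
    cc (t k) <= cc j.
  move=> k j k4 hj; have jE : j = p ((p^-1)%g j) by rewrite permKV.
  case: (ltnP ((p^-1)%g j) k) => ak.
    by have := hj _ ak; rewrite /t idx_ord -jE eqxx.
  rewrite [X in _ <= cc X]jE; apply: hp; rewrite idx_val //; lia.
have tle : forall a b, (a <= b)%N -> (b < 4)%N -> cc (t a) <= cc (t b).
  move=> a b ab b4; apply: hp; rewrite !idx_val //; lia.
have tne : forall a b, (a < 4)%N -> (b < 4)%N -> a != b -> t a != t b.
  move=> a b a4 b4 ab; apply/eqP => /tinj h; rewrite h ?eqxx in ab => //; lia.
have pairmin : forall i j, i != j -> cc (t 0) + cc (t 1) <= cc i + cc j.
  move=> i j ij; case: (eqVneq i (t 0)) => [i0|i0].
    rewrite i0 lerD2l; apply: hk => // k'; rewrite ltnS leqn0 => /eqP ->.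
    by rewrite eq_sym -i0.
  rewrite [X in _ <= X]addrC; apply: lerD; first by apply: hk => // k'; rewrite ltn0.
  by apply: hk => // k'; rewrite ltnS leqn0 => /eqP ->.
pose C := \sum_k cc k.
pose W := 2^-1 * C - cc (t 0) - cc (t 1).
have dotw : forall i j, i != j -> dotv c (w R i j) = 2^-1 * C - cc i - cc j.
  by move=> i j ij; rewrite dotv_w.
have hWw : forall i j, i != j -> dotv c (w R i j) <= W.
  move=> i j ij; rewrite dotw // /W -!addrA lerD2l -!opprD lerN2.
  exact: pairmin.
have t01 : t 0 != t 1 by apply: tne.
have hWg0 : dotv c (w R (t 0) (t 1)) = W by rewrite dotw.
have hmN : (m.+1 <= N m)%N by rewrite N_eq; lia.
have [Sx hSx hmax] := argmax_set _ _ _ cc hmN.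
pose V := \sum_(i in Sx) cc i.
have hvV : forall S : {set 'I_(N m)}, #|S| = m.+1 -> dotv c (vS R S) <= V.
  by move=> S hS; rewrite dotv_vS; apply: hmax.
have swap := swap_le _ _ _ _ _ hmax.
case: (ltrP W V) => hWV.
  left; exists c; rewrite FE PmE PIE.
  apply: (@face_sub _ _ _ _ c V (vS R Sx)).
  - by move=> g [S [hS ->]]; left; exists S.
  - move=> g [[S [hS ->]]|[i [j [ij ->]]]]; first exact: hvV.
    by apply: le_trans (ltW hWV); apply: hWw; rewrite neq_ltn ij.
  - by exists Sx.
  - by rewrite dotv_vS.
  - move=> g [[S [hS ->]]|[i [j [ij ->]]]] hg; first by exists S.
    have := hWw i j; rewrite neq_ltn ij hg => /(_ isT) hVW.
    by have := lt_le_trans hWV hVW; rewrite ltxx.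
have hA : forall g, GenP R m g -> dotv c g <= W.
  move=> g [[S [hS ->]]|[i [j [ij ->]]]]; first exact: le_trans (hvV S hS) hWV.
  by apply: hWw; rewrite neq_ltn ij.
have hvS : forall S : {set 'I_(N m)}, dotv c (vS R S) = W -> V <= \sum_(i in S) cc i.
  by move=> S hg; rewrite -dotv_vS hg.
have hout : forall K (S : {set 'I_(N m)}), (K < 4)%N -> #|S| = m.+1 ->
    exists j, j \notin S /\ cc (t K) <= cc j.
  move=> K S K4 hS.
  have hc0 : (#|[set t k | k : 'I_K]| + #|S| < N m)%N.
    have hc : (#|[set t k | k : 'I_K]| <= K)%N.
      by rewrite -[X in (_ <= X)%N]card_ord; apply: leq_imset_card.
    rewrite hS; have := N_eq m; lia.
  have [j [jS jX]] := exists_out (N m) S [set t k | k : 'I_K] hc0.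
  exists j; split => //; apply: hk => // k' k'K; apply/eqP => e.
  by move: jX; rewrite e; case/imsetP; exists (Ordinal k'K).
have hsum : forall i j, i != j -> dotv c (w R i j) = W ->
    cc i + cc j = cc (t 0) + cc (t 1).
  move=> i j ij; rewrite dotw // /W; lra.
have t0le : forall j, cc (t 0) <= cc j by move=> j; apply: hk => // k'; rewrite ltn0.
have t1le : forall j, j != t 0 -> cc (t 1) <= cc j.
  by move=> j j0; apply: hk => // k'; rewrite ltnS leqn0 => /eqP ->.
have t2le : forall j, j != t 0 -> j != t 1 -> cc (t 2) <= cc j.
  move=> j j0 j1; apply: hk => // -[|[|]] // _.
have pinvK : forall j, p ((p^-1)%g j) = j by move=> j; rewrite permKV.
have pK : forall j, (p^-1)%g (p j) = j by move=> j; rewrite permK.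
case: (ltrP (cc (t 0)) (cc (t 2))) => h02.
  have AB : forall g, GenP R m g -> dotv c g = W -> (permv (p^-1)%g @` GenII R m) g.
    move=> g [[S [hS ->]]|[i [j [ij ->]]]] hg.
      have SV := hvS S hg.
      have t0S : t 0 \notin S.
        apply/negP => t0S; have [j [jS hj]] := hout 2%N S isT hS.
        have := swap S hS SV (t 0) j t0S jS => h.
        by have := lt_le_trans (lt_le_trans h02 hj) h; rewrite ltxx.
      exists (vS R (p @^-1: S)).
        left; exists (p @^-1: S); split; first by rewrite card_preimset //; apply: perm_inj.
        split => // r; rewrite inE lt0n => rS; apply/negP => /eqP r0.
        have : r = idx m 0 by apply: val_inj; rewrite /= idx_val.
        by move=> e; rewrite e in rS; rewrite rS in t0S.
      by rewrite permv_vS; congr vS; apply/setP => k; rewrite !inE pinvK.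
    have ij' : i != j by rewrite neq_ltn ij.
    have hs := hsum i j ij' hg.
    have : (i == t 0) || (j == t 0).
      apply/negPn/negP; rewrite negb_or => /andP[i0 j0].
      case: (eqVneq i (t 1)) => [i1|i1].
        have j1 : j != t 1 by rewrite -i1 eq_sym.
        have := t2le j j0 j1; rewrite i1 in hs; lra.
      have := t2le i i0 i1; have := t1le j j0; lra.
    have key : forall j', j' != t 0 -> (permv (p^-1)%g @` GenII R m) (w R (t 0) j').
      move=> j' j0; exists (w R (idx m 0) ((p^-1)%g j')).
        right; exists ((p^-1)%g j'); split => //; rewrite lt0n; apply/negP => /eqP e.
        have : (p^-1)%g j' = idx m 0 by apply: val_inj; rewrite /= idx_val.
        by move=> e'; move: j0; rewrite -(pinvK j') e' eqxx.
      by rewrite permv_w invgK pinvK.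
    case/orP => /eqP e; first by rewrite e; apply: key; rewrite -e eq_sym.
    by rewrite e w_sym; apply: key; rewrite -e.
  right; exists (p^-1)%g; left.
  exists c; rewrite FE PmE PIIE conv_perm.
  apply: (@face_sub _ _ _ _ c W (w R (t 0) (t 1))) => //.
  - move=> g [g' hg' <-]; apply: GenP_perm.
    case: hg' => [[S [hS [_ ->]]]|[j [hj ->]]]; first by left; exists S.
    apply: GenP_w; apply/eqP => e; by rewrite -e idx_val in hj.
  - by apply: AB => //; apply: GenP_w.
have e02 : cc (t 0) = cc (t 2).
  by apply/le_anti/andP; split; [exact: tle|].
have e01 : cc (t 1) = cc (t 0).
  apply/le_anti/andP; split; last exact: tle.
  rewrite e02; exact: tle.
have tk0 : forall k, (k < 3)%N -> cc (t k) = cc (t 0).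
  by move=> [|[|[|]]].
have geT3 : forall i, (3 <= (p^-1)%g i)%N -> cc (t 3) <= cc i.
  move=> i hi; have := hp (idx m 3) ((p^-1)%g i); rewrite pinvK idx_val; [exact: (fun h => h hi) | lia].
case: (ltrP (cc (t 0)) (cc (t 3))) => h03.
  have AB : forall g, GenP R m g -> dotv c g = W -> (permv (p^-1)%g @` GenIII R m) g.
    move=> g [[S [hS ->]]|[i [j [ij ->]]]] hg.
      have SV := hvS S hg.
      have tS : forall k, (k < 3)%N -> t k \notin S.
        move=> k k3; apply/negP => tkS; have [j [jS hj]] := hout 3%N S isT hS.
        have := swap S hS SV (t k) j tkS jS => h.
        rewrite tk0 // in h.
        by have := lt_le_trans (lt_le_trans h03 hj) h; rewrite ltxx.
      exists (vS R (p @^-1: S)).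
        left; exists (p @^-1: S); split; first by rewrite card_preimset //; apply: perm_inj.
        split => // r; rewrite inE => rS; rewrite leqNgt; apply/negP => r3.
        have : r = idx m r by rewrite idx_ord.
        by move=> e; rewrite e in rS; have := tS r r3; rewrite /t rS.
      by rewrite permv_vS; congr vS; apply/setP => k; rewrite !inE pinvK.
    have ij' : i != j by rewrite neq_ltn ij.
    have hs := hsum i j ij' hg; rewrite e01 in hs.
    have ai : ((p^-1)%g i < 3)%N.
      rewrite ltnNge; apply/negP => /geT3 hi; have := t0le j; lra.
    have aj : ((p^-1)%g j < 3)%N.
      rewrite ltnNge; apply/negP => /geT3 hj; have := t0le i; lra.
    have ab : (p^-1)%g i != (p^-1)%g j by rewrite (inj_eq perm_inj).
    exists (w R ((p^-1)%g i) ((p^-1)%g j)); last by rewrite permv_w invgK !pinvK.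
    right; case: (ltngtP ((p^-1)%g i) ((p^-1)%g j)) => h.
    - by exists ((p^-1)%g i), ((p^-1)%g j); split => //; split.
    - by exists ((p^-1)%g j), ((p^-1)%g i); split => //; split => //; exact: w_sym.
    - by move/val_inj: h => h; rewrite h eqxx in ab.
  right; exists (p^-1)%g; right.
  exists c; rewrite FE PmE PIIIE conv_perm.
  apply: (@face_sub _ _ _ _ c W (w R (t 0) (t 1))) => //.
  - move=> g [g' hg' <-]; apply: GenP_perm.
    case: hg' => [[S [hS [_ ->]]]|[i [j [ij [_ ->]]]]]; first by left; exists S.
    by right; exists i, j.
  - by apply: AB => //; apply: GenP_w.
have e03 : cc (t 3) = cc (t 0).
  by apply/le_anti/andP; split; [|exact: tle].
pose x0 := cc (t 0).
pose T4 := [set t k | k : 'I_4].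
have hT4 : forall j, j \in T4 -> cc j = x0.
  move=> j /imsetP [k _ ->]; apply/le_anti/andP; split.
    by rewrite /x0 -e03; apply: tle => //; rewrite -ltnS.
  by apply: tle.
pose d := fun j => cc j - x0.
have d0 : forall j, 0 <= d j by move=> j; rewrite subr_ge0.
have dT4 : forall j, j \in T4 -> d j = 0 by move=> j /hT4 h; rewrite /d h subrr.
pose E := \sum_(i in Sx) d i.
pose D := \sum_i d i.
have VE : V = E + (m.+1)%:R * x0.
  by rewrite /E sumrB sumr_const hSx mulr_natl subrK.
have WD : W = 2^-1 * D + (m.+1)%:R * x0.
  rewrite /W /D sumrB sumr_const card_ord -/C -[x0 *+ _]mulr_natl mulrBr mulrA halfN.
  rewrite e01 -/x0; lra.
have hDE : 2 * E <= D by move: hWV; rewrite VE WD; lra.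
have DE : D = E + \sum_(i in ~: Sx) d i by rewrite /D (split_sum _ _ Sx).
have E0 : 0 <= E by apply: sumr_ge0 => i _.
case: (boolP [exists j in Sx, cc j == x0]).
  case/existsP => j0 /andP [j0S /eqP hj0].
  have out0 : forall j, j \notin Sx -> d j = 0.
    move=> j jS; apply/le_anti; rewrite d0 andbT /d subr_le0 -hj0.
    exact: (swap Sx hSx (lexx _) j0 j j0S jS).
  have hc0 : \sum_(i in ~: Sx) d i = 0.
    by apply: big1 => i; rewrite inE; apply: out0.
  have D0 : D = 0.
    move: hDE; rewrite DE hc0 addr0 => h; lra.
  have all0 : forall j, cc j = x0.
    move=> j; have := psumr_eq0P (fun i _ => d0 i) D0 (i := j) isT.
    by move/eqP; rewrite subr_eq0 => /eqP.
  exfalso; apply: FneP.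
  rewrite FE PmE (face_eq (GenP R m) c W (w R (t 0) (t 1)) hA (GenP_w _ _ _ _ t01) hWg0).
  congr conv; apply/seteqP; split => g /=; first by case.
  move=> hg; split => //; case: hg => [[S [hS ->]]|[i [j [ij ->]]]].
    rewrite dotv_vS WD D0 mulr0 add0r.
    under eq_bigr => i _ do rewrite (all0 i : c ord0 i = x0).
    by rewrite sumr_const hS mulr_natl.
  by rewrite dotw ?neq_ltn ?ij // /W !all0.
move=> hneg.
have dpos : forall j, j \in Sx -> 0 < d j.
  move=> j jS; rewrite lt_def d0 andbT subr_eq0; apply: contraNneq hneg => e.
  by apply/existsP; exists j; rewrite jS e eqxx.
have T4Sx : forall j, j \in T4 -> j \notin Sx.
  move=> j jT; apply/negP => jS; have := dpos j jS; by rewrite dT4 // ltxx.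
pose L := ~: Sx :\: T4.
have cardT4 : #|T4| = 4%N.
  have N4 : (4 <= N m)%N by apply: leq_trans Nge.
  rewrite card_imset ?card_ord // => a b /tinj h; apply: val_inj; apply: h.
    exact: leq_trans (ltn_ord a) N4.
  exact: leq_trans (ltn_ord b) N4.
have cardL : #|L| = m.+1.
  have h1 := cardsC Sx; rewrite card_ord hSx in h1.
  have h2 := cardsID T4 (~: Sx).
  have h3 : ~: Sx :&: T4 = T4.
    apply/setP => j; rewrite !inE; case jT: (j \in T4); last by rewrite andbF.
    by rewrite T4Sx.
  rewrite h3 cardT4 in h2; exact: arithL h1 h2.
have DL : \sum_(i in ~: Sx) d i = \sum_(i in L) d i.
  rewrite (big_setID T4) /= big1 ?add0r // => i; rewrite inE => /andP[_ iT].
  exact: dT4.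
pose Rs := \sum_(i in L) d i.
have dbl : \sum_(j in Sx) \sum_(l in L) (d j - d l) = (m.+1)%:R * (E - Rs).
  under eq_bigr do rewrite sumrB sumr_const cardL.
  by rewrite sumrB sumrMnl sumr_const hSx mulr_natl mulrnBl.
have Lout : forall l, l \in L -> l \notin Sx.
  by move=> l; rewrite !inE => /andP[_ ->].
have dbl0 : forall j, j \in Sx -> 0 <= \sum_(l in L) (d j - d l).
  move=> j jS; apply: sumr_ge0 => l lL; rewrite subr_ge0 /d lerD2r.
  exact: (swap Sx hSx (lexx _) j l jS (Lout l lL)).
have ERs : Rs = E.
  have h1 : 0 <= E - Rs.
    rewrite -(pmulr_rge0 _ (ltr0Sn R m)) -dbl; exact: sumr_ge0.
  move: hDE; rewrite DE DL -/Rs => h2; lra.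
have dbl_eq0 : \sum_(j in Sx) \sum_(l in L) (d j - d l) = 0.
  by rewrite dbl ERs subrr mulr0.
have term0 : forall j l, j \in Sx -> l \in L -> d j = d l.
  move=> j l jS lL.
  have hin := psumr_eq0P dbl0 dbl_eq0 jS.
  have hnn : forall l', l' \in L -> 0 <= d j - d l'.
    move=> l' lL'; rewrite subr_ge0 /d lerD2r.
    exact: (swap Sx hSx (lexx _) j l' jS (Lout l' lL')).
  by apply/eqP; rewrite -subr_eq0; apply/eqP; apply: (psumr_eq0P hnn hin lL).
have [j0 j0S] : exists j0, j0 \in Sx.
  by apply/card_gt0P; rewrite hSx.
have [l0 l0L] : exists l0, l0 \in L.
  by apply/card_gt0P; rewrite cardL.
pose y := d j0.
have hy : forall j, j \notin T4 -> d j = y.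
  move=> j jT; case: (boolP (j \in Sx)) => jS.
    by rewrite /y (term0 j l0 jS l0L) (term0 j0 l0 j0S l0L).
  have jL : j \in L by rewrite !inE jS jT.
  by rewrite /y (term0 j0 j j0S jL).
have ypos : 0 < y := dpos j0 j0S.
have dE : forall j, cc j = x0 + (if j \in T4 then 0 else y).
  move=> j; case: ifP => jT; first by rewrite addr0 hT4.
  by rewrite -(hy j (negbT jT)) /d addrC subrK.
have EY : E = (m.+1)%:R * y.
  rewrite /E (eq_bigr (fun _ => y)) ?sumr_const ?hSx ?mulr_natl // => j jS.
  apply: hy; apply/negP => jT; by rewrite (negbTE (T4Sx j jT)) in jS.
have WY : W = (m.+1)%:R * y + (m.+1)%:R * x0.
  have h2 : 2^-1 * (E + E) = E.
    lra.
  by rewrite WD DE DL -/Rs ERs h2 EY.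
have dotform : forall x : 'rV[R]_(N m), dotv c x =
    x0 * (\sum_j x ord0 j) + y * (\sum_j x ord0 j - \sum_(j in T4) x ord0 j).
  move=> x; rewrite /dotv.
  under eq_bigr => j _ do rewrite (dE j : c ord0 j = _) mulrDl.
  rewrite big_split /= -big_distrr /=; congr (_ + _).
  have -> : \sum_j x ord0 j - \sum_(j in T4) x ord0 j = \sum_(j in ~: T4) x ord0 j.
    by rewrite (split_sum _ _ T4 (fun j => x ord0 j)) addrAC subrr add0r.
  rewrite (split_sum _ _ T4) big1 ?add0r; last by move=> j ->; rewrite mul0r.
  rewrite big_distrr /=; apply: eq_bigr => j; rewrite inE => /negbTE ->.
  by [].
have sumT4 : forall x : 'rV[R]_(N m), \sum_(j in T4) x ord0 j =
    x ord0 (t 0) + x ord0 (t 1) + x ord0 (t 2) + x ord0 (t 3).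
  move=> x; rewrite big_imset /=; last first.
    move=> a b _ _ /tinj h; apply: val_inj; apply: h.
      exact: leq_trans (ltn_ord a) (leq_trans _ Nge).
    exact: leq_trans (ltn_ord b) (leq_trans _ Nge).
  rewrite -(sum4 R (fun k => x ord0 (t k))); apply: eq_bigl => k; by [].
have key : forall x, Pm R m x -> (dotv c x = W <->
    x ord0 (t 0) + x ord0 (t 1) + x ord0 (t 2) + x ord0 (t 3) = 0).
  move=> x hx; rewrite dotform (sum_Pm _ _ _ hx) sumT4 WY.
  exact: key_arith.
exfalso; apply: (Fne0 (p^-1)%g).
rewrite FE PmE (face_eq2 (GenP R m) c W (w R (t 0) (t 1)) hA (GenP_w _ _ _ _ t01) hWg0) -PmE.
apply/seteqP; split => x /=.
  move=> [hx hW]; exists (permv p x); last exact: permvKV.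
  split; first exact: Pm_perm.
  by rewrite !permv_entry; apply/(key x hx).
move=> [z [hz hz0] <-]; have hx := Pm_perm _ _ (p^-1)%g z hz.
split => //; apply/(key _ hx).
by rewrite !permv_entry /t !pK.
Qed.
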